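(* Let $(u,v),(u',v')\in F^2$ with $(u,v)\sim_{AC}(u',v')$, and let $\varphi$ be an endomorphism of $F$ such that $(\varphi(x),\varphi(y))\in\mathcal{B}_2$. Then $(\varphi(u),\varphi(v))\sim_{AC}(\varphi(u'),\varphi(v'))$.
   Context: $F=F(x,y)$ is the free group on $\{x,y\}$. $\mathcal{B}_2$ is the set of pairs $(r_1,r_2)\in F^2$ whose normal closure in $F$ is all of $F$. The Andrews–Curtis (AC) moves on a pair $(r_1,r_2)$ are: replace $r_i$ by $r_ir_j$ ($i\ne j$); replace $r_i$ by $r_i^{-1}$; replace $r_i$ by $w^{-1}r_iw$ for some $w\in F$. Two pairs are AC-equivalent, written $\sim_{AC}$, if one can be obtained from the other by a finite sequence of AC-moves. *)

(* Defs.v *)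
(* The free group F = F(x,y) on two generators,
   realised as the set of freely reduced words over {x, y, x^-1, y^-1}. *)
From HB Require Import structures.
From mathcomp Require Import all_boot.
From Stdlib Require Import Relation_Operators.

Set Implicit Arguments.
Unset Strict Implicit.
Unset Printing Implicit Defensive.

(* A letter (g, s): generator g (false = x, true = y), sign s (false = +1, true = -1). *)
Definition letter := (bool * bool)%type.

Definition flip (a : letter) : letter := (a.1, ~~ a.2).

Definition cancels (a b : letter) : bool := (a.1 == b.1) && (a.2 != b.2).

Definition reduced (w : seq letter) : bool :=
  sorted (fun a b => ~~ cancels a b) w.

Definition push (a : letter) (w : seq letter) : seq letter :=
  match w with
  | b :: w' => if cancels a b then w' else a :: w
  | [::] => [:: a]
  end.

Lemma push_reduced a w : reduced w -> reduced (push a w).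
Proof.
case: w => [|b w] //= Hw.
case: ifP => Hc.
  by move: Hw; rewrite /reduced /=; case: w => //= c w /andP[].
by rewrite /reduced /= Hc.
Qed.

Record F := MkF { fval : seq letter; fvalP : reduced fval }.

HB.instance Definition _ := [isSub for fval].
HB.instance Definition _ := [Equality of F by <:].

Definition F_one : F := @MkF [::] isT.

Definition gen_x : F := @MkF [:: (false, false)] isT.
Definition gen_y : F := @MkF [:: (true, false)] isT.

Definition mulw (w1 w2 : seq letter) : seq letter := foldr push w2 w1.

Lemma mulw_reduced w1 w2 : reduced w2 -> reduced (mulw w1 w2).
Proof. by move=> H; elim: w1 => [|a w1 IH] //=; apply: push_reduced. Qed.

Definition F_mul (g h : F) : F := MkF (mulw_reduced (fval g) (fvalP h)).

Definition invw_acc (acc w : seq letter) : seq letter :=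
  foldl (fun acc a => push (flip a) acc) acc w.

Lemma invw_acc_reduced w acc : reduced acc -> reduced (invw_acc acc w).
Proof.
elim: w acc => [|a w IH] acc H //=; apply: IH; exact: push_reduced.
Qed.

Definition F_inv (g : F) : F := MkF (invw_acc_reduced (fval g) (isT : reduced [::])).

Definition F_conj (w r : F) : F := F_mul (F_inv w) (F_mul r w).

Inductive in_ncl (r1 r2 : F) : F -> Prop :=
| ncl_one : in_ncl r1 r2 F_one
| ncl_r1 : in_ncl r1 r2 r1
| ncl_r2 : in_ncl r1 r2 r2
| ncl_mul a b : in_ncl r1 r2 a -> in_ncl r1 r2 b -> in_ncl r1 r2 (F_mul a b)
| ncl_inv a : in_ncl r1 r2 a -> in_ncl r1 r2 (F_inv a)
| ncl_conj w a : in_ncl r1 r2 a -> in_ncl r1 r2 (F_conj w a).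

Definition B2 (p : F * F) : Prop := forall g : F, in_ncl p.1 p.2 g.

Inductive ac_move : F * F -> F * F -> Prop :=
| ac_mul1 r1 r2 : ac_move (r1, r2) (F_mul r1 r2, r2)
| ac_mul2 r1 r2 : ac_move (r1, r2) (r1, F_mul r2 r1)
| ac_inv1 r1 r2 : ac_move (r1, r2) (F_inv r1, r2)
| ac_inv2 r1 r2 : ac_move (r1, r2) (r1, F_inv r2)
| ac_conj1 w r1 r2 : ac_move (r1, r2) (F_conj w r1, r2)
| ac_conj2 w r1 r2 : ac_move (r1, r2) (r1, F_conj w r2).

Definition ac_equiv : F * F -> F * F -> Prop := clos_refl_trans (F * F) ac_move.

Definition is_endo (phi : F -> F) : Prop :=
  forall g h : F, phi (F_mul g h) = F_mul (phi g) (phi h).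

(* Main.v *)
Require Import Defs.
From mathcomp Require Import all_boot.
From Stdlib Require Import Relation_Operators.
Set Implicit Arguments.
Unset Strict Implicit.

Lemma flipK a : flip (flip a) = a.
Proof. by case: a => [g s]; rewrite /flip /= negbK. Qed.

Lemma cancels_flip a b : cancels a b -> b = flip a.
Proof.
case: a b => [g s] [g' s']; rewrite /cancels /flip /= => /andP[/eqP -> ].
by case: s; case: s'.
Qed.

Lemma cancels_flip_self a : cancels a (flip a).
Proof. by case: a => [g s]; rewrite /cancels /flip /= eqxx; case: s. Qed.

Lemma push_inv a z : reduced z -> push a (push (flip a) z) = z.
Proof.
case: z => [|c z] /=.
  by rewrite cancels_flip_self.
move=> Hz.
case: ifP => Hc.
  have Ec : c = a by rewrite (cancels_flip Hc) flipK.
  subst c.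
  case: z Hz => [|d z] //= /andP[Hd _].
  by rewrite (negbTE Hd).
by rewrite /= cancels_flip_self.
Qed.

Lemma mulw_red_nil w : reduced w -> mulw w [::] = w.
Proof.
elim: w => [|a w IH] //= Hw.
rewrite IH; last by move: Hw; rewrite /reduced /=; case: w {IH} => //= b w /andP[].
by case: w Hw {IH} => //= b w /andP[Hc _]; rewrite (negbTE Hc).
Qed.

Lemma mulw_cat s1 s2 z : mulw (s1 ++ s2) z = mulw s1 (mulw s2 z).
Proof. by rewrite /mulw foldr_cat. Qed.

Lemma mulw_push a w z : reduced z -> mulw (push a w) z = push a (mulw w z).
Proof.
move=> Hz; case: w => [|b w] //=.
case: ifP => Hc //=.
rewrite (cancels_flip Hc) push_inv //; exact: mulw_reduced.
Qed.

Lemma mulwA s1 s2 z : reduced z -> mulw (mulw s1 s2) z = mulw s1 (mulw s2 z).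
Proof.
move=> Hz; elim: s1 => [|a s1 IH] //=.
by rewrite mulw_push // IH.
Qed.

Definition invl (w : seq letter) := rev (map flip w).

Lemma invw_accE acc w : invw_acc acc w = mulw (invl w) acc.
Proof.
elim: w acc => [|a w IH] acc //=.
rewrite IH /invl /= rev_cons -cats1 mulw_cat //.
Qed.

Lemma invl_cancel w z : reduced z -> mulw (invl w) (mulw w z) = z.
Proof.
move=> Hz; elim: w => [|a w IH] //=.
rewrite /invl /= rev_cons -cats1 mulw_cat /=.
rewrite -{2}(flipK a) push_inv; first by rewrite -/(invl w) IH.
exact: mulw_reduced.
Qed.

Lemma invlK w : invl (invl w) = w.
Proof. by rewrite /invl map_rev revK -map_comp (eq_map flipK) map_id. Qed.

Lemma F_mulA a b c : F_mul a (F_mul b c) = F_mul (F_mul a b) c.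
Proof. apply: val_inj => /=; rewrite mulwA //; exact: fvalP. Qed.

Lemma F_mul1l a : F_mul F_one a = a.
Proof. by apply: val_inj. Qed.

Lemma F_mul1r a : F_mul a F_one = a.
Proof. apply: val_inj => /=; apply: mulw_red_nil; exact: fvalP. Qed.

Lemma F_mulVl a : F_mul (F_inv a) a = F_one.
Proof.
apply: val_inj => /=; rewrite invw_accE mulwA ?fvalP //=.
have := invl_cancel (fval a) (isT : reduced [::]).
by rewrite mulw_red_nil // fvalP.
Qed.

Lemma F_mulVr a : F_mul a (F_inv a) = F_one.
Proof.
apply: val_inj => /=; rewrite invw_accE /=.
by rewrite -{1}(invlK (fval a)) invl_cancel.
Qed.

Section Endo.
Variable phi : F -> F.
Hypothesis Hphi : is_endo phi.

Lemma phi1 : phi F_one = F_one.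
Proof.
have H := Hphi F_one F_one; rewrite F_mul1l in H.
have := congr1 (F_mul (F_inv (phi F_one))) H.
by rewrite F_mulA F_mulVl F_mul1l.
Qed.

Lemma phiV g : phi (F_inv g) = F_inv (phi g).
Proof.
have H : F_mul (phi (F_inv g)) (phi g) = F_one by rewrite -Hphi F_mulVl phi1.
have := congr1 (fun t => F_mul t (F_inv (phi g))) H.
by rewrite -F_mulA F_mulVr F_mul1r F_mul1l.
Qed.

Lemma phiJ w r : phi (F_conj w r) = F_conj (phi w) (phi r).
Proof. by rewrite /F_conj !Hphi phiV. Qed.
End Endo.

Theorem lemma2 (u v u' v' : F) (phi : F -> F) :
  ac_equiv (u, v) (u', v') ->
  is_endo phi ->
  B2 (phi gen_x, phi gen_y) ->
  ac_equiv (phi u, phi v) (phi u', phi v').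
Proof.
move=> H Hphi _.
pose P (p q : F * F) := ac_equiv (phi p.1, phi p.2) (phi q.1, phi q.2).
suff : P (u, v) (u', v') by [].
elim: H => [p q Hm|p|p q r _ IH1 _ IH2].
- apply: rt_step; case: Hm => * /=; rewrite ?Hphi ?phiV ?phiJ //; constructor.
- exact: rt_refl.
- exact: rt_trans IH1 IH2.
Qed.
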